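(* Let $q>0$ and $\ell\in\{0,1,2,\ldots\}$. Then $$\tilde\gamma_\ell(q)=\lim_{\alpha\to\infty}\sum_{n=0}^{\alpha}(-1)^n\frac{\log^\ell(n+q)}{n+q},$$ where $\alpha$ runs through the nonnegative integers.
   Context: For $q>0$, $\zeta_E(z,q)=\sum_{n=0}^\infty (-1)^n (n+q)^{-z}$ for $\mathrm{Re}(z)>0$, extended by analytic continuation to an entire function of $z$. The modified Stieltjes constants $\tilde\gamma_k(q)$ are defined by the Taylor expansion $\zeta_E(z,q)=\sum_{k=0}^\infty\frac{(-1)^k\tilde\gamma_k(q)}{k!}(z-1)^k$. Convention: $\log^0 x=1$. *)

(* Defs.v *)
From Stdlib Require Import Reals.
From Coquelicot Require Import Coquelicot.
Open Scope R_scope.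

(* Alternating Hurwitz zeta function on the real half-line x > 0:
   zetaE x q = sum_{n>=0} (-1)^n (n+q)^(-x)   (convergent for x > 0, q > 0). *)
Definition zetaE (x q : R) : R :=
  Series (fun n : nat => (-1) ^ n * Rpower (INR n + q) (- x)).

(* Modified Stieltjes constants: zetaE(z,q) = sum_k (-1)^k gt_k(q)/k! (z-1)^k,
   i.e. gt_k(q) = (-1)^k * (d/dz)^k zetaE(z,q) at z = 1.  Since z = 1 lies in the
   half-plane Re z > 0 where the defining series converges and zetaE(.,q) is
   real-analytic on the real axis there, the Taylor coefficients at 1 are the
   real derivatives of the restriction to real z. *)
Definition gamma_tilde (k : nat) (q : R) : R :=
  (-1) ^ k * Derive_n (fun x => zetaE x q) k 1.

(* Main.v *)
Require Import Defs.
From Stdlib Require Import Reals.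
From Coquelicot Require Import Coquelicot.
From Stdlib Require Import Lra Lia FunctionalExtensionality.
Open Scope R_scope.

Fixpoint altsum (b : nat -> R) (M k : nat) : R :=
  match k with O => b M | S k => b M - altsum b (S M) k end.

Lemma altsum_bound b k : forall M,
  (forall n, (M <= n)%nat -> 0 <= b n /\ b (S n) <= b n) ->
  0 <= altsum b M k <= b M.
Proof.
  induction k as [|k IH]; intros M H; simpl.
  - destruct (H M (le_n _)); lra.
  - assert (H1 : forall n, (S M <= n)%nat -> 0 <= b n /\ b (S n) <= b n)
      by (intros n Hn; apply H; lia).
    specialize (IH (S M) H1). destruct (H M (le_n _)). lra.
Qed.

Lemma sum_alt b k : forall M,
  sum_n_m (fun n => (-1)^n * b n) M (M + k) = (-1)^M * altsum b M k.
Proof.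
  induction k as [|k IH]; intros M.
  - rewrite Nat.add_0_r, sum_n_n. reflexivity.
  - rewrite sum_Sn_m; [|lia]. rewrite Nat.add_succ_r, <- Nat.add_succ_l, IH.
    simpl. unfold plus; simpl. ring.
Qed.

Lemma is_lim_seq_series a l : is_lim_seq (sum_n a) (Finite l) -> is_series a l.
Proof. intros H. exact H. Qed.

Lemma alt_conv (u b : nat -> R) (s : R) (N0 : nat) :
  (forall n, (N0 <= n)%nat -> u n = s * ((-1)^n * b n)) ->
  (forall n, (N0 <= n)%nat -> 0 <= b n /\ b (S n) <= b n) ->
  is_lim_seq b 0 ->
  ex_series u /\
  forall N, (N0 <= N)%nat -> Rabs (sum_n u N - Series u) <= Rabs s * b (S N).
Proof.
  intros Hu Hb Hlim.
  assert (Step1 : forall N m, (N0 <= N)%nat -> (N <= m)%nat ->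
            Rabs (sum_n u m - sum_n u N) <= Rabs s * b (S N)).
  { intros N m HN Hm.
    assert (HbS : 0 <= b (S N)) by (apply Hb; lia).
    destruct (Nat.eq_dec N m) as [->|Hne].
    - unfold Rminus. rewrite Rplus_opp_r, Rabs_R0.
      apply Rmult_le_pos; [apply Rabs_pos|lra].
    - assert (Hm' : (N < m)%nat) by lia.
      pose proof (sum_n_m_sum_n u N m (Nat.lt_le_incl _ _ Hm')) as E.
      unfold minus, plus, opp in E; simpl in E.
      assert (E2 : sum_n u m - sum_n u N = sum_n_m u (S N) m).
      { symmetry. exact E. }
      rewrite E2.
      assert (E4 : sum_n_m u (S N) m = s * ((-1)^(S N) * altsum b (S N) (m - S N))).
      { transitivity (sum_n_m (fun n => s * ((-1)^n * b n)) (S N) m).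
        { apply sum_n_m_ext_loc. intros n Hn; apply Hu; lia. }
        etransitivity; [apply (sum_n_m_mult_l s (fun n => (-1)^n * b n))|].
        unfold mult; simpl. f_equal.
        replace m with (S N + (m - S N))%nat at 1 by lia. apply sum_alt. }
      rewrite E4.
      rewrite !Rabs_mult, pow_1_abs, Rmult_1_l.
      apply Rmult_le_compat_l; [apply Rabs_pos|].
      destruct (altsum_bound b (m - S N) (S N)) as [A1 A2];
        [intros n Hn; apply Hb; lia|].
      rewrite Rabs_right; lra. }
  assert (Hcv : ex_finite_lim_seq (sum_n u)).
  { apply ex_lim_seq_cauchy_corr. intros eps.
    assert (He : 0 < eps / (2 * (Rabs s + 1))).
    { apply Rdiv_lt_0_compat; [apply cond_pos|]. pose proof (Rabs_pos s); lra. }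
    destruct (proj2 (is_lim_seq_spec b 0) Hlim (mkposreal _ He)) as [N1 HN1].
    exists (N0 + N1)%nat. intros n m Hn Hm.
    set (N := (N0 + N1)%nat).
    assert (Hbn : b (S N) < eps / (2 * (Rabs s + 1))).
    { specialize (HN1 (S N) ltac:(unfold N; lia)). simpl in HN1.
      rewrite Rminus_0_r in HN1. eapply Rle_lt_trans; [apply RRle_abs|exact HN1]. }
    pose proof (Step1 N n ltac:(unfold N; lia) Hn).
    pose proof (Step1 N m ltac:(unfold N; lia) Hm).
    replace (sum_n u n - sum_n u m) with
      ((sum_n u n - sum_n u N) - (sum_n u m - sum_n u N)) by ring.
    eapply Rle_lt_trans; [apply Rabs_triang|]. rewrite Rabs_Ropp.
    assert (HbS : 0 <= b (S N)) by (apply Hb; unfold N; lia).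
    assert (Rabs s * b (S N) * 2 < eps).
    { apply Rmult_lt_compat_r with (r := 2 * (Rabs s + 1)) in Hbn;
        [|pose proof (Rabs_pos s); lra].
      unfold Rdiv in Hbn. rewrite Rmult_assoc, Rinv_l in Hbn;
        [|pose proof (Rabs_pos s); lra].
      pose proof (Rabs_pos s). nra. }
    lra. }
  destruct Hcv as [l Hl].
  assert (HS : Series u = l).
  { unfold Series. rewrite (is_lim_seq_unique _ _ Hl). reflexivity. }
  split.
  - exists l. apply is_lim_seq_series. exact Hl.
  - intros N HN. rewrite HS.
    assert (L2 : is_lim_seq (fun m => Rabs (sum_n u m - sum_n u N)) (Rabs (l - sum_n u N))).
    { apply (is_lim_seq_abs _ (Finite (l - sum_n u N))).
      apply is_lim_seq_minus'; [exact Hl|apply is_lim_seq_const]. }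
    pose proof (is_lim_seq_le_loc _ (fun _ => Rabs s * b (S N)) _ _
       (ex_intro _ N (fun m Hm => Step1 N m HN Hm)) L2 (is_lim_seq_const _)) as H.
    simpl in H. rewrite Rabs_minus_sym. exact H.
Qed.


Lemma exp_pow_INR a j : exp a ^ j = exp (INR j * a).
Proof.
  induction j as [|j IH].
  - simpl. rewrite Rmult_0_l, exp_0. reflexivity.
  - rewrite S_INR. simpl. rewrite IH, <- exp_plus. f_equal. ring.
Qed.

Lemma exp_le_mono a b : a <= b -> exp a <= exp b.
Proof. intros [H|H]; [left; apply exp_increasing; exact H|rewrite H; apply Rle_refl]. Qed.

Lemma mono_lemma (j : nat) y s s' : 0 < s -> s <= s' -> INR j <= y * s ->
  s' ^ j * exp (- y * s') <= s ^ j * exp (- y * s).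
Proof.
  intros Hs Hss' Hj.
  assert (H1 : s' / s <= exp (s' / s - 1)).
  { pose proof (exp_ineq1_le (s' / s - 1)). lra. }
  assert (H2 : (s' / s) ^ j <= exp (INR j * (s' / s - 1))).
  { rewrite <- exp_pow_INR. apply pow_incr. split; [|exact H1].
    apply Rdiv_le_0_compat; lra. }
  assert (H3 : INR j * (s' / s - 1) <= y * (s' - s)).
  { replace (INR j * (s' / s - 1)) with ((INR j / s) * (s' - s)) by (field; lra).
    apply Rmult_le_compat_r; [lra|].
    apply (Rmult_le_reg_r s); [lra|]. unfold Rdiv. rewrite Rmult_assoc, Rinv_l; lra. }
  assert (H4 : s' ^ j = s ^ j * (s' / s) ^ j).
  { rewrite <- Rpow_mult_distr. f_equal. field. lra. }
  rewrite H4, Rmult_assoc. apply Rmult_le_compat_l; [apply pow_le; lra|].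
  apply Rle_trans with (exp (INR j * (s' / s - 1)) * exp (- y * s')).
  { apply Rmult_le_compat_r; [left; apply exp_pos|exact H2]. }
  rewrite <- exp_plus. apply exp_le_mono. lra.
Qed.

Lemma exp_lower x j : 0 <= x -> x ^ (S j) / INR (Factorial.fact (S j)) <= exp x.
Proof.
  intros Hx. eapply Rle_trans; [|apply (exp_ge_taylor x (S j) Hx)].
  rewrite tech5.
  assert (0 <= sum_f_R0 (fun k => x ^ k / INR (Factorial.fact k)) j).
  { apply cond_pos_sum. intros n. apply Rdiv_le_0_compat; [apply pow_le; lra|apply INR_fact_lt_0]. }
  lra.
Qed.

Lemma decay c s (j : nat) : 0 < c -> 0 < s ->
  s ^ j * exp (- c * s) <= INR (Factorial.fact (S j)) / (c ^ (S j) * s).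
Proof.
  intros Hc Hs.
  pose proof (INR_fact_lt_0 (S j)) as HF.
  assert (Hcs : 0 < (c * s) ^ (S j) / INR (Factorial.fact (S j))).
  { apply Rdiv_lt_0_compat; [apply pow_lt; nra|exact HF]. }
  pose proof (exp_lower (c * s) j ltac:(nra)) as HE.
  replace (- c * s) with (- (c * s)) by ring. rewrite exp_Ropp.
  apply Rle_trans with (s ^ j * / ((c * s) ^ (S j) / INR (Factorial.fact (S j)))).
  { apply Rmult_le_compat_l; [apply pow_le; lra|]. apply Rinv_le_contravar; assumption. }
  rewrite Rpow_mult_distr. simpl pow at 3.
  assert (s ^ j <> 0) by (apply pow_nonzero; lra).
  assert (c ^ j <> 0) by (apply pow_nonzero; lra).
  right. field. repeat split; try lra. apply pow_nonzero; lra.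
Qed.


Definition tm (q : R) (j n : nat) (y : R) : R :=
  (-1) ^ n * ((- ln (INR n + q)) ^ j * Rpower (INR n + q) (- y)).
Definition bb (q : R) (j : nat) (y : R) (n : nat) : R :=
  ln (INR n + q) ^ j * exp (- y * ln (INR n + q)).
Definition PP (q : R) (j N : nat) (y : R) : R := sum_n (fun n => tm q j n y) N.
Definition FF (q : R) (j : nat) (y : R) : R := Series (fun n => tm q j n y).

Lemma tm_bb q j n y : tm q j n y = (-1) ^ j * ((-1) ^ n * bb q j y n).
Proof.
  unfold tm, bb, Rpower.
  replace (- ln (INR n + q)) with (-1 * ln (INR n + q)) by ring.
  rewrite Rpow_mult_distr. ring.
Qed.

Lemma ln_big q K : 0 < q -> exists N, forall n, (N <= n)%nat -> K < ln (INR n + q).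
Proof.
  intros Hq. destruct (INR_unbounded (exp K)) as [N HN]. exists N. intros n Hn.
  apply le_INR in Hn.
  rewrite <- (ln_exp K). apply ln_increasing; [apply exp_pos|lra].
Qed.

Lemma lim_bb q j y : 0 < q -> 0 < y -> is_lim_seq (bb q j y) 0.
Proof.
  intros Hq Hy. apply is_lim_seq_spec. intros eps.
  set (F := INR (Factorial.fact (S j))).
  assert (HF : 0 < F) by apply INR_fact_lt_0.
  assert (Hyj : 0 < y ^ S j) by (apply pow_lt; lra).
  pose proof (cond_pos eps) as He.
  destruct (ln_big q (F / (y ^ S j * eps)) Hq) as [N HN].
  exists N. intros n Hn. specialize (HN n Hn).
  assert (HK : 0 < F / (y ^ S j * eps)) by (apply Rdiv_lt_0_compat; nra).
  set (s := ln (INR n + q)) in *.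
  assert (Hs : 0 < s) by lra.
  pose proof (decay y s j Hy Hs) as D. fold F in D.
  unfold bb. fold s. rewrite Rminus_0_r.
  assert (P : 0 <= s ^ j * exp (- y * s)).
  { apply Rmult_le_pos; [apply pow_le; lra|left; apply exp_pos]. }
  rewrite Rabs_right; [|lra].
  eapply Rle_lt_trans; [exact D|].
  apply (Rmult_lt_reg_r (y ^ S j * s)); [nra|].
  unfold Rdiv. rewrite Rmult_assoc, Rinv_l; [|nra].
  apply (Rmult_lt_compat_l (y ^ S j * eps)) in HN; [|nra].
  unfold Rdiv in HN. rewrite <- Rmult_assoc, (Rmult_comm _ F), Rmult_assoc, Rinv_r in HN; nra.
Qed.

Lemma unif q j c : 0 < q -> 0 < c ->
  exists N0, forall y, c <= y ->
   ex_series (fun n => tm q j n y) /\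
   forall N, (N0 <= N)%nat -> Rabs (PP q j N y - FF q j y) <= bb q j c (S N).
Proof.
  intros Hq Hc.
  destruct (ln_big q (INR j / c + 1) Hq) as [N0 HN0].
  exists N0. intros y Hy.
  assert (Hjc : 0 <= INR j / c) by (apply Rdiv_le_0_compat; [apply pos_INR|lra]).
  assert (Hb : forall n, (N0 <= n)%nat -> 0 <= bb q j y n /\ bb q j y (S n) <= bb q j y n).
  { intros n Hn. pose proof (HN0 n Hn) as H1. pose proof (HN0 (S n) ltac:(lia)) as H2.
    unfold bb. split.
    - apply Rmult_le_pos; [apply pow_le; lra|left; apply exp_pos].
    - apply mono_lemma; [lra| |].
      + rewrite S_INR. left. apply ln_increasing; [|lra].
        pose proof (pos_INR n); lra.
      + apply Rle_trans with (c * ln (INR n + q)); [|apply Rmult_le_compat_r; lra].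
        apply (Rmult_le_reg_r (/ c)); [apply Rinv_0_lt_compat; lra|].
        replace (c * ln (INR n + q) * / c) with (ln (INR n + q)) by (field; lra).
        unfold Rdiv in H1. lra. }
  destruct (alt_conv (fun n => tm q j n y) (bb q j y) ((-1) ^ j) N0) as [Hex Hbd].
  { intros n _. apply tm_bb. }
  { exact Hb. }
  { apply lim_bb; lra. }
  split; [exact Hex|].
  intros N HN. eapply Rle_trans; [apply (Hbd N HN)|].
  rewrite pow_1_abs, Rmult_1_l.
  pose proof (HN0 (S N) ltac:(lia)) as H1.
  unfold bb. apply Rmult_le_compat_l; [apply pow_le; lra|].
  apply exp_le_mono. nra.
Qed.


Lemma tm_derive q j n y : is_derive (fun y => tm q j n y) y (tm q (S j) n y).
Proof.
  unfold tm, Rpower. auto_derive; [exact I|]. simpl. ring.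
Qed.

Lemma PP_derive q j N y : is_derive (PP q j N) y (PP q (S j) N y).
Proof.
  induction N as [|N IH].
  - unfold PP. apply is_derive_ext with (fun y => tm q j 0 y).
    { intros t. rewrite sum_O. reflexivity. }
    rewrite sum_O. apply tm_derive.
  - unfold PP in *. apply is_derive_ext with
      (fun y => plus (sum_n (fun n => tm q j n y) N) (tm q j (S N) y)).
    { intros t. rewrite sum_Sn. reflexivity. }
    rewrite sum_Sn. apply (is_derive_plus _ _ _ _ _ IH (tm_derive q j (S N) y)).
Qed.

Lemma Derive_PP q j N : Derive (PP q j N) = PP q (S j) N.
Proof. apply functional_extensionality. intros y. apply is_derive_unique, PP_derive. Qed.

Lemma CVU_PP q j c : 0 < q -> 0 < c -> CVU_dom (PP q j) (fun y => c < y).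
Proof.
  intros Hq Hc eps.
  destruct (unif q j c Hq Hc) as [N0 HN0].
  destruct (proj2 (is_lim_seq_spec _ _) (lim_bb q j c Hq Hc) eps) as [N1 HN1].
  exists (N0 + N1)%nat. intros n Hn y Hy.
  destruct (HN0 y (Rlt_le _ _ Hy)) as [_ Hbd].
  specialize (Hbd n ltac:(lia)). specialize (HN1 (S n) ltac:(lia)).
  rewrite Rminus_0_r in HN1.
  change (Rabs (PP q j n y - FF q j y) < eps).
  eapply Rle_lt_trans; [exact Hbd|]. eapply Rle_lt_trans; [apply RRle_abs|exact HN1].
Qed.

Lemma FF_derive q j x : 0 < q -> 0 < x -> is_derive (FF q j) x (FF q (S j) x).
Proof.
  intros Hq Hx.
  assert (Hc : 0 < x / 2) by lra.
  pose proof (CVU_Derive (PP q j) (fun y => x / 2 < y) (open_gt _)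
    ltac:(intros a b z Ha Hb [H1 H2]; lra) (CVU_PP q j _ Hq Hc)
    ltac:(intros n y _; eexists; apply PP_derive)) as H.
  assert (Hcont : forall n y, x / 2 < y -> continuity_pt (Derive (PP q j n)) y).
  { intros n y _. rewrite Derive_PP. apply continuity_pt_filterlim. apply (@ex_derive_continuous R_AbsRing R_NormedModule).
    eexists; apply PP_derive. }
  assert (Hcv : CVU_dom (fun n y => Derive (PP q j n) y) (fun y => x / 2 < y)).
  { apply (CVU_PP q (S j) _ Hq Hc) || (
    replace (fun n y => Derive (PP q j n) y) with (PP q (S j));
    [apply (CVU_PP q (S j) _ Hq Hc)|];
    apply functional_extensionality; intros n; rewrite <- Derive_PP; reflexivity). }
  specialize (H Hcont Hcv x ltac:(lra)).
  rewrite (Lim_seq_ext _ (fun n => PP q (S j) n x)) in H.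
  2: { intros n. rewrite Derive_PP. reflexivity. }
  exact H.
Qed.


Lemma Derive_n_FF q k : 0 < q -> forall x, 0 < x -> Derive_n (FF q 0) k x = FF q k x.
Proof.
  intros Hq. induction k as [|k IH]; intros x Hx.
  - reflexivity.
  - simpl. rewrite (Derive_ext_loc _ (FF q k)).
    + apply is_derive_unique, FF_derive; assumption.
    + destruct (open_gt 0 x Hx) as [e He]. exists e. intros t Ht. apply IH, He, Ht.
Qed.

Theorem corollary3p8 (q : R) (l : nat) (hq : 0 < q) :
  is_lim_seq
    (fun alpha : nat =>
       sum_n (fun n : nat => (-1) ^ n * (ln (INR n + q) ^ l / (INR n + q))) alpha)
    (gamma_tilde l q).
Proof.
  unfold gamma_tilde.
  rewrite (Derive_n_ext _ (FF q 0)).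
  2: { intros t. unfold zetaE, FF. apply Series_ext. intros n. unfold tm. simpl. ring. }
  rewrite (Derive_n_FF q l hq 1 ltac:(lra)).
  destruct (unif q l 1 hq ltac:(lra)) as [N0 HN0].
  destruct (HN0 1 (Rle_refl _)) as [Hex _].
  assert (HS : is_lim_seq (sum_n (fun n => tm q l n 1)) (FF q l 1)).
  { exact (Series_correct _ Hex). }
  apply (is_lim_seq_scal_l _ ((-1) ^ l)) in HS.
  simpl in HS.
  eapply is_lim_seq_ext; [|exact HS].
  intros N. simpl.
  etransitivity; [symmetry; apply (sum_n_mult_l ((-1) ^ l) (fun n => tm q l n 1))|].
  apply sum_n_ext. intros n. unfold mult; simpl. unfold tm.
  assert (Hp : 0 < INR n + q) by (pose proof (pos_INR n); lra).
  rewrite Rpower_Ropp, Rpower_1 by exact Hp.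
  replace (- ln (INR n + q)) with (-1 * ln (INR n + q)) by ring.
  rewrite Rpow_mult_distr.
  assert (E1 : (-1) ^ l * (-1) ^ l = 1).
  { rewrite <- Rpow_mult_distr. replace (-1 * -1) with 1 by ring. apply pow1. }
  unfold Rdiv.
  transitivity ((-1) ^ l * (-1) ^ l * ((-1) ^ n * (ln (INR n + q) ^ l * / (INR n + q)))); [ring|].
  rewrite E1. ring.
Qed.
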